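(* Let $\sigma_X=(\sigma_X^0,\sigma_X[\cdot,\cdot])$ be a memory-one strategy for player $X$, and let $\alpha,\beta,\gamma\in\mathbb{R}$. Suppose there is a bounded measurable function $\psi:S_X\to\mathbb{R}$ such that for every $x\in S_X$ and $y\in S_Y$, $$\alpha u_X(x,y)+\beta u_Y(x,y)+\gamma=\psi(x)-\lambda\int_{S_X}\psi(s)\,d\sigma_X[x,y](s)-(1-\lambda)\int_{S_X}\psi(s)\,d\sigma_X^0(s).$$ Then for every behavioral strategy $\sigma_Y$ of player $Y$, the expected payoffs satisfy $\alpha\pi_X+\beta\pi_Y+\gamma=0$.
   Context: Standing framework. Let $S_X,S_Y$ be measurable spaces (the action spaces of players $X$ and $Y$), $u_X,u_Y:S_X\times S_Y\to\mathbb{R}$ bounded measurable payoff functions, and $\lambda\in(0,1)$ a discount factor. For $T\ge 0$ let $\mathcal{H}^T=(S_X\times S_Y)^T$ be the set of histories of length $T$ (with $\mathcal{H}^0=\{\varnothing\}$) and $\mathcal{H}=\bigsqcup_{T\ge0}\mathcal{H}^T$. A behavioral strategy for $X$ (resp. $Y$) is a Markov kernel $\sigma_X$ from $\mathcal{H}$ to $S_X$ (resp. $\sigma_Y$ from $\mathcal{H}$ to $S_Y$), assigning to each history a probability measure on the action space. A memory-one strategy for $X$ is a behavioral strategy determined by a probability measure $\sigma_X^0$ on $S_X$ (the initial action, used at the empty history) and a Markov kernel $(x,y)\mapsto\sigma_X[x,y]$ from $S_X\times S_Y$ to $S_X$, with $\sigma_X[h^T]=\sigma_X[x_{T-1},y_{T-1}]$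 for $h^T=((x_0,y_0),\dots,(x_{T-1},y_{T-1}))$, $T\ge1$. Given behavioral strategies $\sigma_X,\sigma_Y$, put $\sigma(h)=\sigma_X[h]\otimes\sigma_Y[h]$ (product measure on $S_X\times S_Y$) and define probability measures $\mu_t$ on $\mathcal{H}^{t+1}$ by $\mu_0=\sigma(\varnothing)$ and $\mu_t(E'\times E)=\int_{E'}\sigma(h)(E)\,d\mu_{t-1}(h)$ for measurable $E'\subseteq\mathcal{H}^t$, $E\subseteq S_X\times S_Y$ (uniquely extended). Let $\nu_t(E)=\mu_t(\mathcal{H}^t\times E)$ be the distribution of the action pair at time $t$. The expected payoffs are $\pi_X=(1-\lambda)\sum_{t=0}^\infty\lambda^t\int_{S_X\times S_Y}u_X\,d\nu_t$ and $\pi_Y=(1-\lambda)\sum_{t=0}^\infty\lambda^t\int_{S_X\times S_Y}u_Y\,d\nu_t$. *)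

(* Defs.v *)
From HB Require Import structures.
From mathcomp Require Import all_boot all_order all_algebra.
From mathcomp Require Import all_classical all_reals all_analysis.
Set Implicit Arguments.
Unset Strict Implicit.
Unset Printing Implicit Defensive.
Import Order.TTheory GRing.Theory Num.Theory.
Import numFieldNormedType.Exports.
Local Open Scope classical_set_scope.
Local Open Scope ring_scope.

Section histories.
Context {dX dY : measure_display} (SX : measurableType dX) (SY : measurableType dY).

Fixpoint histD (T : nat) : measure_display :=
  match T with
  | 0 => (dX, dY).-prod%mdisp
  | T'.+1 => (histD T', (dX, dY).-prod%mdisp).-prod%mdisp
  end.

(* histS T = H^(T+1) = (S_X * S_Y)^(T+1), as the iterated product
   H^(T+1) = H^T * (S_X * S_Y) with the product sigma-algebra. *)
Fixpoint histS (T : nat) : measurableType (histD T) :=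
  match T return measurableType (histD T) with
  | 0 => (SX * SY)%type
  | T'.+1 => (histS T' * (SX * SY))%type
  end.

Definition lastpair (T : nat) : histS T -> (SX * SY)%type :=
  match T return histS T -> (SX * SY)%type with
  | 0 => fun h => h
  | T'.+1 => fun h => h.2
  end.
End histories.
Arguments lastpair {dX dY} SX SY T.

Section play.
Local Open Scope ereal_scope.
Context {dX dY : measure_display} (SX : measurableType dX) (SY : measurableType dY)
  (R : realType).
(* A behavioral strategy is given by its value at the empty history
   (a probability measure) and, for each T, its values on histories of
   length T+1 (a Markov kernel from H^(T+1)). *)
Variables (sX0 : set SX -> \bar R) (sXn : forall (T : nat), histS SX SY T -> set SX -> \bar R).
Variables (sY0 : set SY -> \bar R) (sYn : forall (T : nat), histS SX SY T -> set SY -> \bar R).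
Arguments sXn : clear implicits.
Arguments sYn : clear implicits.

(* mu t : the measure on H^(t+1);
   mu 0 = sigma(empty) = sX0 (x) sY0,
   mu (t+1) A = \int_{h in H^(t+1)} sigma(h)(section of A at h) d(mu t),
   with sigma(h) = sXn h (x) sYn h (product measure). *)
Fixpoint hmu (t : nat) : set (histS SX SY t) -> \bar R :=
  match t return set (histS SX SY t) -> \bar R with
  | 0 => (sX0 \x sY0)
  | t'.+1 => fun A => \int[@hmu t']_h ((sXn t' h \x sYn t' h) (xsection A h))
  end.
Arguments hmu : clear implicits.

(* nu t E = mu t (H^t x E) : distribution of the action pair at time t *)
Definition hnu (t : nat) (E : set (SX * SY)) : \bar R :=
  hmu t (lastpair SX SY t @^-1` E).

Definition payoff (lambda : R) (u : SX * SY -> R) : R :=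
  let term (t : nat) : R := fine (\int[hnu t]_z (u z)%:E) in
  ((1 - lambda) * \big[+%R/0%R]_(0 <= t <oo) (lambda ^+ t * term t))%R.
End play.

(* Main.v *)
Require Import Defs.
From HB Require Import structures.
From mathcomp Require Import all_boot all_order all_algebra.
From mathcomp Require Import all_classical all_reals all_analysis.
From mathcomp Require Import measurable_realfun.
From mathcomp Require Import ring lra.
Import Order.TTheory GRing.Theory Num.Theory.
Import numFieldNormedType.Exports.
Local Open Scope classical_set_scope.
Local Open Scope ring_scope.
Set Implicit Arguments.
Unset Strict Implicit.
Unset Printing Implicit Defensive.

Section kpre.
Context d d' d'' (X : measurableType d) (Y : measurableType d') (Z : measurableType d'')
  (R : realType) (f : X -> Y) (k : R.-pker Y ~> Z).

Definition kpre (mf : measurable_fun setT f) (x : X) : {measure set Z -> \bar R} := k (f x).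

Hypothesis mf : measurable_fun setT f.

Let mkpre (U : set Z) : measurable U -> measurable_fun [set: X] (fun x => kpre mf x U : \bar R).
Proof. move=> mU; exact: measurableT_comp (measurable_kernel k U mU) mf. Qed.

HB.instance Definition _ := isKernel.Build _ _ X Z R (kpre mf) mkpre.

Let kpre_prob x : kpre mf x setT = 1%E.
Proof. exact: prob_kernel. Qed.

HB.instance Definition _ := Kernel_isProbability.Build _ _ _ _ _ (kpre mf) kpre_prob.
End kpre.

Section kconst.
Context d (Y : measurableType d) (R : realType) (m : {measure set Y -> \bar R}).

Definition kconst (m1 : m setT = 1%E) (x : unit) : {measure set Y -> \bar R} := m.

Hypothesis m1 : m setT = 1%E.

Let mkconst U : measurable U -> measurable_fun setT (fun x => kconst m1 x U : \bar R).
Proof. by move=> mU; exact: measurable_cst. Qed.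

HB.instance Definition _ := isKernel.Build _ _ unit Y R (kconst m1) mkconst.

Let kconst_prob x : kconst m1 x setT = 1%E.
Proof. exact: m1. Qed.

HB.instance Definition _ := Kernel_isProbability.Build _ _ _ _ _ (kconst m1) kconst_prob.
End kconst.

Section eqmi.
Local Open Scope ereal_scope.
Context d (T : measurableType d) (R : realType).
Import HBNNSimple.

Lemma eq_mi (m1 m2 : set T -> \bar R) (f : T -> \bar R) :
  (forall A, measurable A -> m1 A = m2 A) -> \int[m1]_x f x = \int[m2]_x f x.
Proof.
move=> m12; rewrite /integral; congr (ereal_sup _ - ereal_sup _);
  apply/seteqP; split => _ [h hP <-]; exists h => //; apply: eq_fsbigr => r _;
  by rewrite m12.
Qed.
End eqmi.

Section bint.
Local Open Scope ereal_scope.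
Context d (T : measurableType d) (R : realType).

Lemma bint (mu : {measure set T -> \bar R}) (f : T -> R) :
  mu setT < +oo -> measurable_fun setT f -> (exists M : R, forall x, (`|f x| <= M)%R) ->
  mu.-integrable setT (EFin \o f).
Proof.
move=> mufin mf [M hM]; apply: measurable_bounded_integrable => //.
exists M; split; first exact: num_real.
move=> N MN x _ /=; exact: le_trans (hM x) (ltW MN).
Qed.

Lemma iZ (mu : {measure set T -> \bar R}) (f : T -> R) (k : R) :
  mu.-integrable setT (EFin \o f) -> mu.-integrable setT (EFin \o (fun x => k * f x)%R).
Proof.
move=> h; apply: (eq_integrable measurableT _ _ _ (integrableZl measurableT k h)).
by move=> x _ /=; rewrite EFinM.
Qed.

Lemma iD (mu : {measure set T -> \bar R}) (f g : T -> R) :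
  mu.-integrable setT (EFin \o f) -> mu.-integrable setT (EFin \o g) ->
  mu.-integrable setT (EFin \o (fun x => f x + g x)%R).
Proof.
move=> hf hg; apply: (eq_integrable measurableT _ _ _ (integrableD measurableT hf hg)).
by move=> x _ /=; rewrite EFinD.
Qed.

Lemma iB (mu : {measure set T -> \bar R}) (f g : T -> R) :
  mu.-integrable setT (EFin \o f) -> mu.-integrable setT (EFin \o g) ->
  mu.-integrable setT (EFin \o (fun x => f x - g x)%R).
Proof.
move=> hf hg; apply: (eq_integrable measurableT _ _ _ (integrableB measurableT hf hg)).
by move=> x _ /=; rewrite EFinB.
Qed.
End bint.

Local Open Scope ereal_scope.

Section kprod.
Context d0 d1 d2 (T0 : measurableType d0) (T1 : measurableType d1)
  (T2 : measurableType d2) (R : realType)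
  (k1 : R.-pker T0 ~> T1) (k2 : R.-pker (T0 * T1) ~> T2).

Lemma kproductE x A : measurable A ->
  mkproduct k1 k2 x A = \int[k1 x]_y k2 (x, y) (xsection A y).
Proof.
move=> mA; rewrite /mkproduct/= /kproduct; apply: eq_integral => y _.
exact: kernel.intker_indicE.
Qed.

Let kproduct_setT x : mkproduct k1 k2 x setT = 1.
Proof.
rewrite kproductE //.
under eq_integral do rewrite xsectionE preimage_setT prob_kernel.
by rewrite integral_cst // mul1e prob_kernel.
Qed.

HB.instance Definition _ := Kernel_isProbability.Build _ _ _ _ _ (mkproduct k1 k2) kproduct_setT.

Lemma kproduct_fst x B : measurable B ->
  mkproduct k1 k2 x (fst @^-1` B) = k1 x B.
Proof.
move=> mB; rewrite -setXT kproductE; last exact: measurableX.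
transitivity (\int[k1 x]_y (\1_B y)%:E); last by rewrite integral_indic // setIT.
apply: eq_integral => y _; have [yB|yB] := boolP (y \in B).
  by rewrite in_xsectionX // prob_kernel indicE yB.
by rewrite notin_xsectionX // measure0 indicE (negbTE yB).
Qed.

Lemma kproduct_snd x E : measurable E ->
  mkproduct k1 k2 x (snd @^-1` E) = \int[k1 x]_y k2 (x, y) E.
Proof.
move=> mE; rewrite kproductE; last by rewrite -setTX; exact: measurableX.
by apply: eq_integral => y _; rewrite xsection_preimage_snd.
Qed.

Lemma int_fst x (g : T1 -> \bar R) : (forall z, 0 <= g z) -> measurable_fun setT g ->
  \int[mkproduct k1 k2 x]_z g z.1 = \int[k1 x]_y g y.
Proof.
move=> g0 mg.
transitivity (\int[pushforward (mkproduct k1 k2 x) fst]_(y in setT) g y).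
  by rewrite ge0_integral_pushforward // preimage_setT.
apply: eq_measure_integral => A mA _.
exact: kproduct_fst.
Qed.

Lemma int_snd x (g : T2 -> \bar R) : (forall z, 0 <= g z) -> measurable_fun setT g ->
  \int[mkproduct k1 k2 x]_z g z.2 = \int[k1 x]_y \int[k2 (x, y)]_z g z.
Proof.
move=> g0 mg.
transitivity (\int[pushforward (mkproduct k1 k2 x) snd]_(y in setT) g y).
  by rewrite ge0_integral_pushforward // preimage_setT.
rewrite -integral_kcomp //.
apply: eq_measure_integral => A mA _.
exact: kproduct_snd.
Qed.
End kprod.

Section series.
Context (R : realType).

Lemma cv (lam : R) (a : nat -> R) K : (0 <= lam)%R -> (lam < 1)%R ->
  (forall t, (`|a t| <= K)%R) -> cvgn (series (fun t => lam ^+ t * a t)%R).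
Proof.
move=> l0 l1 ha.
have K0 : (0 <= K)%R by apply: le_trans (ha 0%N).
apply: normed_cvg.
apply: (@series_le_cvg _ _ (geometric K lam)).
- by move=> n; exact: normr_ge0.
- by move=> n; rewrite /geometric /= mulr_ge0 // exprn_ge0.
- move=> n; rewrite /geometric /= normrM ger0_norm ?exprn_ge0 // mulrC.
  by apply: ler_wpM2r; [exact: exprn_ge0 | exact: ha].
- by apply: is_cvg_geometric_series; rewrite ger0_norm.
Qed.
End series.

Section game.
Context (R : realType) (dX dY : measure_display)
  (SX : measurableType dX) (SY : measurableType dY)
  (sX0 : probability SX R) (kX : R.-pker (SX * SY)%type ~> SX)
  (sY0 : probability SY R) (sYn : forall T : nat, R.-pker (histS SX SY T) ~> SY).

Lemma mlp t : measurable_fun setT (lastpair SX SY t).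
Proof. by case: t => [|t] /=; [exact: measurable_id | exact: measurable_snd]. Qed.

Arguments mlp : clear implicits.

Definition Kt t := mkproduct (kpre kX (mlp t)) (kpre (sYn t) (@measurable_fst _ _ _ _)).

Arguments Kt : clear implicits.

Lemma KtE t h A : measurable A ->
  Kt t h A = (kX (lastpair SX SY t h) \x sYn t h) A.
Proof. by move=> mA; rewrite /Kt kproductE. Qed.

Fixpoint Pt (t : nat) : {m : {measure set (histS SX SY t) -> \bar R} | m setT = 1} :=
  match t return {m : {measure set (histS SX SY t) -> \bar R} | m setT = 1} with
  | 0 => exist _ (mkproduct (kconst (probability_setT sX0))
            (kpre (kconst (probability_setT sY0)) (@measurable_fst _ _ _ _)) tt)
          (prob_kernel tt)
  | t'.+1 => exist _ (mkproduct (kconst (proj2_sig (Pt t')))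
            (kpre (Kt t') (@measurable_snd _ _ _ _)) tt) (prob_kernel tt)
  end.

Arguments Pt : clear implicits.
Definition Pm t := proj1_sig (Pt t).
Arguments Pm : clear implicits.

Lemma Pm1 t : Pm t setT = 1.
Proof. exact: proj2_sig (Pt t). Qed.

Local Notation sXn := (fun (T : nat) (h : histS SX SY T) => kX (lastpair SX SY T h)).
Local Notation sYn' := (fun (T : nat) (h : histS SX SY T) => sYn T h).
Local Notation H t := (@hmu _ _ _ _ _ sX0 sXn sY0 sYn' t).

Lemma hmu_P t A : measurable A -> H t A = Pm t A.
Proof.
elim: t A => [|t IH] A mA.
  by rewrite /Pm /= kproductE.
rewrite /Pm /= kproductE //=.
transitivity (\int[H t]_h Kt t h (xsection A h)).
  congr (integral _ _ _); apply/funext => h; rewrite KtE //.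
  exact: measurable_xsection.
transitivity (\int[Pm t]_h Kt t h (xsection A h)); last by [].
by apply: eq_mi => B mB; exact: IH.
Qed.

Local Notation N t := (hnu sX0 sXn sY0 sYn' t).

Lemma hnu_int t (g : SX * SY -> \bar R) : measurable_fun setT g ->
  (Pm t).-integrable setT (g \o lastpair SX SY t) ->
  \int[N t]_z g z = \int[Pm t]_h g (lastpair SX SY t h).
Proof.
move=> mg ig.
transitivity (\int[pushforward (Pm t) (lastpair SX SY t)]_(z in setT) g z).
  apply: eq_mi => E mE; rewrite /hnu /pushforward hmu_P //.
  by rewrite -[X in measurable X]setTI; exact: mlp.
by rewrite (integral_pushforward (mlp t)) // preimage_setT.
Qed.

Variable psi : SX -> R.
Hypothesis mpsi : measurable_fun setT psi.
Variable M : R.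
Hypothesis hM : forall s, (`|psi s| <= M)%R.

Definition phi s := (psi s + M)%R.
Definition RF z := Rintegral (kX z) setT phi.
Definition cc := Rintegral sX0 setT phi.
Definition bb t := Rintegral (Pm t) setT (fun h => phi (lastpair SX SY t h).1).

Lemma phi_ge0 x : (0 <= phi x)%R.
Proof. rewrite /phi; have := hM x; rewrite ler_norml => /andP[h _]; lra. Qed.

Lemma phi_le x : (`|phi x| <= M + M)%R.
Proof.
rewrite ger0_norm ?phi_ge0 // /phi lerD2r.
by apply: le_trans (hM x); exact: ler_norm.
Qed.

Lemma mphi : measurable_fun setT phi.
Proof. exact: measurable_funD. Qed.

Lemma iphi (mu : {measure set SX -> \bar R}) : mu setT = 1 -> mu.-integrable setT (EFin \o phi).
Proof.
move=> mu1; apply: bint; [by rewrite mu1 ltry | exact: mphi | by exists (M + M)%R; exact: phi_le].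
Qed.

Lemma bb0 : bb 0 = cc.
Proof.
rewrite /bb /cc /Rintegral /Pm /=; congr fine.
transitivity (\int[kconst (probability_setT sX0) tt]_x (phi x)%:E); last by [].
apply: int_fst.
  by move=> z; rewrite lee_fin phi_ge0.
exact/measurable_EFinP/mphi.
Qed.

Lemma kX1 z : kX z setT = 1.
Proof. exact: prob_kernel. Qed.

Lemma RF_ge0 z : (0 <= RF z)%R.
Proof. by apply: Rintegral_ge0 => x _; exact: phi_ge0. Qed.

Lemma icst (mu : {measure set (SX * SY)%type -> \bar R}) (r : R) : mu setT = 1 ->
  mu.-integrable setT (EFin \o (fun _ => r)).
Proof. by move=> mu1; apply: bint; [rewrite mu1 ltry | exact: measurable_cst | exists (`|r|)%R]. Qed.

Lemma icstX (mu : {measure set SX -> \bar R}) (r : R) : mu setT = 1 ->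
  mu.-integrable setT (EFin \o (fun _ => r)).
Proof. by move=> mu1; apply: bint; [rewrite mu1 ltry | exact: measurable_cst | exists (`|r|)%R]. Qed.

Lemma RF_le z : (`|RF z| <= M + M)%R.
Proof.
rewrite ger0_norm ?RF_ge0 //.
have H := le_Rintegral (mu := kX z) (D := setT) (f1 := phi) (f2 := fun _ => (M + M)%R)
  measurableT (iphi (kX1 z)) (icstX _ (kX1 z))
  (fun x _ => le_trans (ler_norm _) (phi_le x)).
by rewrite Rintegral_cst // prob_kernel /= mulr1 in H.
Qed.

Lemma mRF : measurable_fun setT RF.
Proof.
apply: (measurableT_comp (fine_measurable measurableT)).
apply: (measurable_fun_integral_kernel (measurable_kernel kX)).
  by move=> z; rewrite lee_fin phi_ge0.
exact/measurable_EFinP/mphi.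
Qed.

Lemma bb1 t : bb t.+1 = Rintegral (Pm t) setT (fun h => RF (lastpair SX SY t h)).
Proof.
rewrite /bb /Rintegral; congr fine.
transitivity (\int[kconst (proj2_sig (Pt t)) tt]_y
   \int[kpre (Kt t) (@measurable_snd _ _ _ _) (tt, y)]_z (phi z.1)%:E).
  apply: int_snd.
    by move=> z; rewrite lee_fin phi_ge0.
  by apply/measurable_EFinP; apply: measurableT_comp mphi measurable_fst.
change (\int[Pm t]_y \int[Kt t y]_z (phi z.1)%:E = \int[Pm t]_h (RF (lastpair SX SY t h))%:E).
apply: eq_integral => y _.
transitivity (\int[kpre kX (mlp t) y]_x (phi x)%:E).
  apply: int_fst.
    by move=> z; rewrite lee_fin phi_ge0.
  exact/measurable_EFinP/mphi.
rewrite /RF /Rintegral fineK //.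
exact: (integrable_fin_num measurableT (iphi (kX1 _))).
Qed.

Lemma iP t (f : histS SX SY t -> R) : measurable_fun setT f ->
  (exists M : R, forall x, (`|f x| <= M)%R) -> (Pm t).-integrable setT (EFin \o f).
Proof. by move=> mf bf; apply: bint => //; rewrite Pm1 ltry. Qed.

Lemma ipsi (mu : {measure set SX -> \bar R}) : mu setT = 1 -> mu.-integrable setT (EFin \o psi).
Proof. by move=> mu1; apply: bint => //; [rewrite mu1 ltry | exists M]. Qed.

Lemma Rint_shift (mu : {measure set SX -> \bar R}) : mu setT = 1 ->
  Rintegral mu setT phi = (Rintegral mu setT psi + M)%R.
Proof.
move=> mu1; rewrite /phi RintegralD //; last exact: icstX.
  by rewrite Rintegral_cst // mu1 /= mulr1.
exact: ipsi.
Qed.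

Variables (uX uY : SX * SY -> R) (lambda alpha beta gamma : R).
Hypotheses (muX : measurable_fun setT uX) (muY : measurable_fun setT uY).
Hypotheses (buX : exists M : R, forall z, (`|uX z| <= M)%R)
  (buY : exists M : R, forall z, (`|uY z| <= M)%R).
Hypothesis hpsi : forall (x : SX) (y : SY),
     (alpha * uX (x, y) + beta * uY (x, y) + gamma =
     psi x - lambda * (Rintegral (kX (x, y)) setT psi)
           - (1 - lambda) * (Rintegral sX0 setT psi))%R.

Lemma hpsi' z : (alpha * uX z + beta * uY z + gamma =
  phi z.1 - lambda * RF z - (1 - lambda) * cc)%R.
Proof.
case: z => x y; rewrite hpsi /RF /cc !Rint_shift //; last exact: kX1.
  by rewrite /phi /=; ring.
exact: probability_setT.
Qed.

Lemma termE t (u : SX * SY -> R) : measurable_fun setT u ->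
  (exists M : R, forall z, (`|u z| <= M)%R) ->
  fine (\int[N t]_z (u z)%:E) = Rintegral (Pm t) setT (fun h => u (lastpair SX SY t h)).
Proof.
move=> mu [Mu hMu]; rewrite /Rintegral hnu_int //.
  exact/measurable_EFinP.
apply: (iP (f := fun h => u (lastpair SX SY t h))).
  exact: measurableT_comp mu (mlp t).
by exists Mu.
Qed.

Lemma Rbound d (T : measurableType d) (mu : {measure set T -> \bar R}) (f : T -> R) (K : R) :
  mu setT = 1 -> measurable_fun setT f -> (forall x, (`|f x| <= K)%R) ->
  (`|Rintegral mu setT f| <= K)%R.
Proof.
move=> mu1 mf hK.
have i1 : mu.-integrable setT (EFin \o f) by apply: bint => //; [rewrite mu1 ltry | exists K].
have i2 := integrable_norm i1.
have i3 : mu.-integrable setT (EFin \o (fun _ => K)).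
  by apply: bint; [rewrite mu1 ltry | exact: measurable_cst | exists (`|K|)%R].
apply: le_trans (le_normr_Rintegral measurableT i1) _.
apply: le_trans (le_Rintegral measurableT i2 i3 (fun x _ => hK x)) _.
by rewrite Rintegral_cst // mu1 /= mulr1.
Qed.

Lemma key t : (alpha * fine (\int[N t]_z (uX z)%:E) + beta * fine (\int[N t]_z (uY z)%:E) + gamma
  = bb t - lambda * bb t.+1 - (1 - lambda) * cc)%R.
Proof.
rewrite !termE //.
set lp := lastpair SX SY t.
have mlpt : measurable_fun setT lp := mlp t.
have iX : (Pm t).-integrable setT (EFin \o (fun h => uX (lp h))).
  apply: iP; first exact: measurableT_comp muX mlpt.
  by case: buX => Mu h; exists Mu.
have iY : (Pm t).-integrable setT (EFin \o (fun h => uY (lp h))).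
  apply: iP; first exact: measurableT_comp muY mlpt.
  by case: buY => Mu h; exists Mu.
have iphl : (Pm t).-integrable setT (EFin \o (fun h => phi (lp h).1)).
  apply: iP; first by apply: measurableT_comp mphi _; exact: measurableT_comp measurable_fst mlpt.
  by exists (M + M)%R => x; exact: phi_le.
have iRF : (Pm t).-integrable setT (EFin \o (fun h => RF (lp h))).
  apply: iP; first exact: measurableT_comp mRF mlpt.
  by exists (M + M)%R => x; exact: RF_le.
have icP (r : R) : (Pm t).-integrable setT (EFin \o (fun _ => r)).
  by apply: iP; [exact: measurable_cst | exists (`|r|)%R].
have cst1 (r : R) : Rintegral (Pm t) setT (fun _ => r) = r.
  by rewrite Rintegral_cst // Pm1 /= mulr1.
rewrite bb1 -/lp /bb -/lp.
rewrite -(RintegralZl alpha measurableT iX) -(RintegralZl beta measurableT iY) -(cst1 gamma).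
have iaX := iZ alpha iX.
have ibY := iZ beta iY.
have iab := iD iaX ibY.
rewrite -(RintegralD measurableT iaX ibY) -(RintegralD measurableT iab (icP gamma)).
rewrite -(RintegralZl lambda measurableT iRF) -(cst1 ((1 - lambda) * cc)%R).
have ilR := iZ lambda iRF.
rewrite -(RintegralB measurableT iphl ilR) -(RintegralB measurableT (iB iphl ilR) (icP _)).
by apply: eq_Rintegral => h _; rewrite hpsi'.
Qed.

Hypotheses (l0 : (0 < lambda)%R) (l1 : (lambda < 1)%R).

Lemma Tb (u : SX * SY -> R) : measurable_fun setT u ->
  (exists M : R, forall z, (`|u z| <= M)%R) ->
  exists K : R, forall t, (`|fine (\int[N t]_z (u z)%:E)| <= K)%R.
Proof.
move=> mu [Mu hMu]; exists Mu => t; rewrite termE //; last by exists Mu.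
apply: Rbound => //; first exact: Pm1.
exact: measurableT_comp mu (mlp t).
Qed.

Lemma bb_le t : (`|bb t| <= M + M)%R.
Proof.
apply: Rbound => //; first exact: Pm1.
  apply: measurableT_comp mphi _; exact: measurableT_comp measurable_fst (mlp t).
by move=> x; exact: phi_le.
Qed.

Lemma main : (alpha * payoff sX0 sXn sY0 sYn' lambda uX
  + beta * payoff sX0 sXn sY0 sYn' lambda uY + gamma = 0)%R.
Proof.
rewrite /payoff.
set TX := fun t => fine (\int[N t]_z (uX z)%:E).
set TY := fun t => fine (\int[N t]_z (uY z)%:E).
set SX' := fun n => \big[+%R/0%R]_(0 <= t < n) (lambda ^+ t * TX t)%R.
set SY' := fun n => \big[+%R/0%R]_(0 <= t < n) (lambda ^+ t * TY t)%R.
have [KX hKX] := Tb muX buX.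
have [KY hKY] := Tb muY buY.
have cX : cvgn SX' by apply: (cv (ltW l0) l1 hKX).
have cY : cvgn SY' by apply: (cv (ltW l0) l1 hKY).
have ident n : ((1 - lambda) * alpha * SX' n + (1 - lambda) * beta * SY' n + gamma
   = lambda ^+ n * ((1 - lambda) * (cc - bb n) + gamma))%R.
  elim: n => [|n IH].
    by rewrite /SX' /SY' !big_geq // bb0 expr0; ring.
  rewrite /SX' /SY' !big_nat_recr //= -/(SX' n) -/(SY' n).
  transitivity ((1 - lambda) * alpha * SX' n + (1 - lambda) * beta * SY' n + gamma
    + (1 - lambda) * lambda ^+ n * (alpha * TX n + beta * TY n + gamma)
    - (1 - lambda) * lambda ^+ n * gamma)%R; first by ring.
  rewrite IH /TX /TY key exprS; ring.
pose Kb := ((1 - lambda) * (`|cc| + (M + M)) + `|gamma|)%R.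
have w0 : (fun n => (1 - lambda) * alpha * SX' n + (1 - lambda) * beta * SY' n + gamma)%R
    @ \oo --> (0%R : R).
  apply: (@squeeze_cvgr _ _ _ _ (fun n => - (Kb * lambda ^+ n))%R (fun n => Kb * lambda ^+ n)%R).
  - apply: nearW => n; rewrite ident.
    suff hb : (`|lambda ^+ n * ((1 - lambda) * (cc - bb n) + gamma)| <= Kb * lambda ^+ n)%R.
      by move: hb; rewrite ler_norml.
    rewrite normrM (ger0_norm (exprn_ge0 _ (ltW l0))) mulrC.
    apply: ler_wpM2r; first exact: exprn_ge0 (ltW l0).
    apply: le_trans (ler_normD _ _) _; rewrite /Kb lerD2r normrM (ger0_norm (ltW _ : (0 <= 1 - lambda)%R)); last by rewrite subr_gt0.
    apply: ler_wpM2l; first by rewrite subr_ge0 ltW.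
    by apply: le_trans (ler_normB _ _) _; rewrite lerD2l bb_le.
  - rewrite -oppr0; apply: cvgN; rewrite -(mulr0 Kb); apply: cvgM; first exact: cvg_cst.
    by apply: cvg_expr; rewrite ger0_norm ?ltW.
  - rewrite -(mulr0 Kb); apply: cvgM; first exact: cvg_cst.
    by apply: cvg_expr; rewrite ger0_norm ?ltW.
have w1 : (fun n => (1 - lambda) * alpha * SX' n + (1 - lambda) * beta * SY' n + gamma)%R
    @ \oo --> ((1 - lambda) * alpha * limn SX' + (1 - lambda) * beta * limn SY' + gamma)%R.
  apply: cvgD; last exact: cvg_cst.
  apply: cvgD; apply: cvgM; (try exact: cvg_cst) => //.
have E := cvg_unique _ w1 w0.
have {}E := E (@Rhausdorff R) _.
by rewrite -[RHS]E; ring.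
Qed.
End game.


Local Close Scope ereal_scope.

Theorem theorem1 (R : realType) (dX dY : measure_display)
  (SX : measurableType dX) (SY : measurableType dY)
  (uX uY : SX * SY -> R) (lambda : R)
  (muX : measurable_fun setT uX) (muY : measurable_fun setT uY)
  (buX : exists M : R, forall z, `|uX z| <= M)
  (buY : exists M : R, forall z, `|uY z| <= M)
  (lambda_gt0 : 0 < lambda) (lambda_lt1 : lambda < 1)
  (* memory-one strategy of X: initial action and kernel sigma_X[x, y] *)
  (sX0 : probability SX R) (kX : R.-pker (SX * SY)%type ~> SX)
  (alpha beta gamma : R) (psi : SX -> R)
  (mpsi : measurable_fun setT psi)
  (bpsi : exists M : R, forall s, `|psi s| <= M)
  (hpsi : forall (x : SX) (y : SY),
     alpha * uX (x, y) + beta * uY (x, y) + gamma =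
     psi x - lambda * (\int[kX (x, y)]_s psi s)
           - (1 - lambda) * (\int[sX0]_s psi s)) :
  (* every behavioral strategy of Y: value at the empty history, and
     Markov kernels on histories of each length T+1 *)
  forall (sY0 : probability SY R)
         (sYn : forall T : nat, R.-pker (histS SX SY T) ~> SY),
  let sXn := fun (T : nat) (h : histS SX SY T) => kX (lastpair SX SY T h) in
  let sYn' := fun (T : nat) (h : histS SX SY T) => sYn T h in
  alpha * payoff sX0 sXn sY0 sYn' lambda uX
  + beta * payoff sX0 sXn sY0 sYn' lambda uY + gamma = 0.
Proof.
Proof.
move=> sY0 sYn sXn sYn'.
case: bpsi => M hM.
exact: (main sY0 sYn mpsi hM muX muY buX buY hpsi lambda_gt0 lambda_lt1).
Qed.
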